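(* For every sequence ${\mathbf s}=(s_1,\dots,s_l)$ in $\widehat{\mathcal S}$ with $l\ge1$ we have ${\mathcal Y}_T({\mathbf s})=\Delta({\mathcal Y}_T({\mathbf s}'))\oplus(c^{\alpha_l})^{-1}\big(\Delta({\mathcal Y}_T({\mathbf s}'))\big)\subset\bigoplus_{\sigma\in I({\mathbf s})}Q_T$.
   Context: $R$ irreducible reduced finite root system (positive roots $R^+$, simple roots $\Pi$, highest root $\gamma$); $\widehat X=X\oplus\mathbb Z$, $\delta=(0,-1)$, affine roots $\widehat R=\{\alpha+n\delta\}$. $\widehat{\mathcal W}$ generated by $s_{\alpha,n}(v,m)=(v-(\langle\alpha,v\rangle-mn)\alpha^\vee,m)$, acting contragrediently on $\widehat X$ (permuting $\widehat R$); $\widehat{\mathcal S}=\{s_{\alpha,0}:\alpha\in\Pi\}\cup\{s_{\gamma,1}\}$ with simple affine roots $\alpha$ resp. $-\gamma+\delta$. $T$: commutative unital domain, $2$ not a zero divisor, affine roots nonzero in $\widehat X\otimes T$; $S_T$ the symmetric algebra of $\widehat X\otimes T$; $Q_T=S_T[2^{-1}][\alpha^{-1}:\alpha\in\widehat R]$. For ${\mathbf s}$: $I({\mathbf s})$ = strictly increasing tuples in $\{1,\dots,l\}$, $\operatorname{ev}(i_1,\dots,i_n)=s_{i_1}\cdots s_{i_n}$; ${\mathbf s}'=(s_1,\dots,s_{l-1})$, $I({\mathbf s})=I({\mathbf s}')\sqcup I({\mathbf s}')s_l$; $\Delta\colon\bigoplus_{I({\mathbf s}')}Q_T\to\bigoplus_{I({\mathbf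 s})}Q_T$, $\Delta(z)_\gamma=\Delta(z)_{\gamma s_l}=z_\gamma$; $c^\lambda$ multiplies the $\sigma$-component by $\operatorname{ev}(\sigma)(\lambda)\otimes 1$, and $c^{\alpha_l}$ ($\alpha_l$ the simple affine root of $s_l$) is invertible on $\bigoplus_{I({\mathbf s})}Q_T$. ${\mathcal Y}_T(\emptyset)=S_T\subset Q_T$, ${\mathcal Y}_T({\mathbf s})=\Delta({\mathcal Y}_T({\mathbf s}'))+(c^{\alpha_l})^{-1}(\Delta({\mathcal Y}_T({\mathbf s}')))$. *)

(* Defs.v *)
From HB Require Import structures.
From mathcomp Require Import all_boot all_order all_algebra.
From mathcomp Require Import mpoly.

Set Implicit Arguments.
Unset Strict Implicit.
Unset Printing Implicit Defensive.

Import Order.TTheory GRing.Theory Num.Theory.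
Local Open Scope ring_scope.

(* The lattice X is Z^n, modelled as 'rV[int]_n; its dual X^v is also      *)
(* 'rV[int]_n, with the standard pairing <x, v> = sum_i x_i v_i.           *)
Definition pairing (n : nat) (x v : 'rV[int]_n) : int := \sum_(i < n) x 0 i * v 0 i.

Section RootSystem.
Variable n : nat.
Variable R : seq 'rV[int]_n.
Variable cor : 'rV[int]_n -> 'rV[int]_n.      (* alpha |-> alpha^v in X^v *)

Definition refl (a x : 'rV[int]_n) : 'rV[int]_n := x - (pairing x (cor a)) *: a.

Definition irred_reduced_root_system : Prop :=
  [/\ uniq R, R != [::] & (0 : 'rV[int]_n) \notin R] /\
  (forall a, a \in R -> pairing a (cor a) = 2) /\
  (forall a b, a \in R -> b \in R -> refl a b \in R) /\
  (forall a b, a \in R -> b \in R ->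
      cor (refl a b) = cor b - (pairing a (cor b)) *: cor a) /\
  (forall a b, a \in R -> b \in R -> forall c d : int, c != 0 ->
      c *: b = d *: a -> b = a \/ b = - a) /\
  (forall P : pred 'rV[int]_n,
      (forall a b, a \in R -> b \in R -> P a -> ~~ P b ->
         pairing b (cor a) = 0) ->
      all P R \/ all (predC P) R).

Variable Pi : seq 'rV[int]_n.

Definition lincomb (c : 'I_(size Pi) -> int) : 'rV[int]_n :=
  \sum_(i < size Pi) c i *: Pi`_i.

Definition is_base : Prop :=
  [/\ uniq Pi, all (fun a => a \in R) Pi,
      (forall c, lincomb c = 0 -> forall i, c i = 0)
    & (forall a, a \in R -> exists c, a = lincomb c /\
          ((forall i, 0 <= c i) \/ (forall i, c i <= 0)))].

Definition positive_root (a : 'rV[int]_n) : Prop :=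
  a \in R /\ exists c, a = lincomb c /\ forall i, 0 <= c i.

Definition is_highest_root (gam : 'rV[int]_n) : Prop :=
  gam \in R /\ forall a, a \in R -> exists c, gam - a = lincomb c /\ forall i, 0 <= c i.

Variable gam : 'rV[int]_n.

(* Xhat = X (+) Z; delta = (0, -1); the affine root alpha + m delta is (alpha, -m). *)
Definition Xhat := ('rV[int]_n * int)%type.

Definition aff_refl (a : 'rV[int]_n) (m : int) (x : Xhat) : Xhat :=
  (x.1 - pairing x.1 (cor a) *: a, x.2 - m * pairing x.1 (cor a)).

(* simple affine reflections S^ : Some i = s_{alpha_i,0}, None = s_{gam,1} *)
Definition Shat := option 'I_(size Pi).

Definition sref (o : Shat) : Xhat -> Xhat :=
  match o with Some i => aff_refl Pi`_i 0 | None => aff_refl gam 1 end.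

(* the simple affine root of a simple affine reflection: alpha_i resp. -gam + delta *)
Definition sroot (o : Shat) : Xhat :=
  match o with Some i => (Pi`_i, 0) | None => (- gam, -1) end.

(* ev(i_1,...,i_m) = s_{i_1} ... s_{i_m} (indices 1-based into s), acting on Xhat *)
Definition ev (s : seq Shat) (sigma : seq nat) (x : Xhat) : Xhat :=
  foldr (fun i acc => sref (nth None s i.-1) acc) x sigma.

Variable T : idomainType.

(* S_T = Sym(Xhat (x) T) = T[x_0,...,x_n] via the standard basis of Z^n (+) Z *)
Definition ST := {mpoly T[n.+1]}.

Definition coordX (x : Xhat) (i : 'I_n.+1) : int :=
  if (insub (val i) : option 'I_n) is Some j then x.1 0 j else x.2.

(* lambda |-> lambda (x) 1 in S_T *)
Definition lin (x : Xhat) : ST := \sum_(i < n.+1) ((coordX x i)%:~R : T) *: 'X_i.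

(* Q_T is realised inside the fraction field K of the domain S_T *)
Definition K := {fraction ST}.
Definition toK (p : ST) : K := FracField.tofrac p.

Definition affine_root (d : Xhat) : bool := d.1 \in R.

Definition inQ (q : K) : Prop :=
  exists (p : ST) (k : nat) (ds : seq Xhat), all affine_root ds /\
    q = toK p / toK (2%:R ^+ k * \prod_(d <- ds) lin d).

(* elements of (+)_{sigma in I(s)} Q_T are functions seq nat -> K supported on I(s) *)
Definition Vec := seq nat -> K.

Definition inI (l : nat) (sigma : seq nat) : bool :=
  sorted ltn sigma && all (fun i => (0 < i <= l)%N) sigma.

Definition vadd (y w : Vec) : Vec := fun sigma => y sigma + w sigma.

(* Delta : (+)_{I(s')} Q_T -> (+)_{I(s)} Q_T, Delta(z)_g = Delta(z)_{g s_l} = z_g *)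
Definition Delta (l : nat) (z : Vec) : Vec :=
  fun sigma => if inI l sigma then z [seq i <- sigma | i != l] else 0.

(* c^lambda and its inverse (multiplication / division by ev(sigma)(lambda) (x) 1) *)
Definition cmul (s : seq Shat) (lam : Xhat) (z : Vec) : Vec :=
  fun sigma => toK (lin (ev s sigma lam)) * z sigma.
Definition cinv (s : seq Shat) (lam : Xhat) (z : Vec) : Vec :=
  fun sigma => z sigma / toK (lin (ev s sigma lam)).

Fixpoint Yrec (r : seq Shat) : Vec -> Prop :=
  match r with
  | [::] => fun z => (exists p : ST, z [::] = toK p) /\
                     (forall sigma, sigma != [::] -> z sigma = 0)
  | a :: r' => fun z => exists y1 y2, Yrec r' y1 /\ Yrec r' y2 /\
      z = vadd (Delta (size r) y1) (cinv (rev r) (sroot a) (Delta (size r) y2))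
  end.

Definition Y (s : seq Shat) : Vec -> Prop := Yrec (rev s).

End RootSystem.

(* Main.v *)
Require Import Defs.
From HB Require Import structures.
From mathcomp Require Import all_boot all_order all_algebra.
From mathcomp Require Import mpoly.
From Stdlib Require Import FunctionalExtensionality.
From mathcomp Require Import ring.
Import Order.TTheory GRing.Theory Num.Theory.
Local Open Scope ring_scope.

Section Aux.
Variable n : nat.

Definition negX (x : Xhat n) : Xhat n := (- x.1, - x.2).

Lemma pairingN (x v : 'rV[int]_n) : pairing (- x) v = - pairing x v.
Proof.
rewrite /pairing -sumrN; apply: eq_bigr => i _; by rewrite mxE mulNr.
Qed.

Lemma aff_reflN cor a m x : aff_refl cor a m (negX x) = negX (aff_refl cor a m x).
Proof.
rewrite /aff_refl /negX /= pairingN; congr (_, _).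
  by rewrite scaleNr opprB opprK addrC.
by rewrite mulrN opprB opprK addrC.
Qed.

Lemma linN (T : idomainType) (x : Xhat n) : lin T (negX x) = - lin T x.
Proof.
rewrite /lin -sumrN; apply: eq_bigr => i _.
rewrite /coordX /=; case: insub => [j|] /=; last by rewrite rmorphN scaleNr.
by rewrite mxE rmorphN scaleNr.
Qed.

Lemma evN cor (Pi : seq 'rV[int]_n) gam (s : seq (Shat Pi)) tau (x : Xhat n) :
  ev cor gam s tau (negX x) = negX (ev cor gam s tau x).
Proof.
elim: tau => [|i tau IH] //=; rewrite IH.
by case: (nth None s i.-1) => [j|]; rewrite /= aff_reflN.
Qed.
End Aux.
Arguments negX {n}.
Arguments linN {n T}.
Arguments evN {n}.
Arguments pairingN {n}.

Lemma sorted_rcons_lt (tau : seq nat) x :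
  sorted ltn tau -> all (fun i => i < x)%N tau -> sorted ltn (rcons tau x).
Proof.
case: tau => [|y t] // Hs Ha; rewrite /= rcons_path.
rewrite /= in Hs; rewrite Hs /=.
have : last y t \in y :: t by apply: mem_last.
by move/(allP Ha).
Qed.

Lemma inI_filter l sigma :
  inI l.+1 sigma -> inI l [seq i <- sigma | i != l.+1].
Proof.
case/andP=> Hs Ha; apply/andP; split.
  by apply: sorted_filter => //; exact: ltn_trans.
rewrite all_filter; apply/allP=> i Hi /=; apply/implyP=> Hne.
move/allP: Ha => /(_ i Hi) /andP [H0 H1]; rewrite H0 /=.
by rewrite -ltnS ltn_neqAle Hne H1.
Qed.

Lemma inI_S l tau : inI l tau -> inI l.+1 tau.
Proof.
case/andP=> Hs Ha; rewrite /inI Hs /=; apply/allP=> i /(allP Ha) /andP[-> H] /=.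
exact: leqW.
Qed.

Lemma inI_rcons l tau : inI l tau -> inI l.+1 (rcons tau l.+1).
Proof.
case/andP=> Hs Ha; apply/andP; split.
  apply: sorted_rcons_lt => //; apply/allP=> i /(allP Ha) /andP[_ H].
  by rewrite ltnS.
rewrite all_rcons /= leqnn; apply/allP=> i /(allP Ha) /andP[-> H] /=.
exact: leqW.
Qed.

Lemma filter_idI l tau : inI l tau -> [seq i <- tau | i != l.+1] = tau.
Proof.
case/andP=> _ Ha; apply/all_filterP/allP=> i /(allP Ha) /andP[_ H].
by rewrite neq_ltn ltnS H.
Qed.

Lemma filter_rconsI l tau :
  inI l tau -> [seq i <- rcons tau l.+1 | i != l.+1] = tau.
Proof.
move=> H; rewrite -cats1 filter_cat /= eqxx cats0; exact: filter_idI.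
Qed.

Arguments inI_filter {l sigma}.
Arguments inI_S {l tau}.
Arguments inI_rcons {l tau}.
Arguments filter_idI {l tau}.
Arguments filter_rconsI {l tau}.

Section Q.
Variables (n : nat) (R : seq 'rV[int]_n) (T : idomainType).

Definition goodD (d : ST n T) := exists k ds, all (affine_root R) ds /\
  d = 2%:R ^+ k * \prod_(x <- ds) lin T x.

Lemma inQE (q : K n T) : inQ R q <-> exists p d, goodD d /\ q = toK p / toK d.
Proof.
split.
  move=> [p [k [ds [H E]]]]; exists p, (2%:R ^+ k * \prod_(x <- ds) lin T x).
  by split => //; exists k, ds.
by move=> [p [d [[k [ds [H ->]]] E]]]; exists p, k, ds.
Qed.

Lemma goodD_mul d1 d2 : goodD d1 -> goodD d2 -> goodD (d1 * d2).
Proof.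
move=> [k1 [ds1 [H1 ->]]] [k2 [ds2 [H2 ->]]].
exists (k1 + k2)%N, (ds1 ++ ds2); split; first by rewrite all_cat H1 H2.
rewrite big_cat exprD /= -!mulrA; congr (_ * _); by rewrite mulrCA.
Qed.

Lemma inQ_add (q1 q2 : K n T) : inQ R q1 -> inQ R q2 -> inQ R (q1 + q2).
Proof.
move=> /inQE [p1 [d1 [G1 ->]]] /inQE [p2 [d2 [G2 ->]]].
have [E1|N1] := eqVneq (toK d1) 0.
  by rewrite E1 invr0 mulr0 add0r; apply/inQE; exists p2, d2.
have [E2|N2] := eqVneq (toK d2) 0.
  by rewrite E2 invr0 mulr0 addr0; apply/inQE; exists p1, d1.
rewrite (addf_div _ _ N1 N2); apply/inQE.
exists (p1 * d2 + p2 * d1), (d1 * d2); split; first exact: goodD_mul.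
by rewrite /toK tofracD !tofracM.
Qed.

Lemma inQ_div (q : K n T) d : affine_root R d -> inQ R q -> inQ R (q / toK (lin T d)).
Proof.
move=> Hd /inQE [p [e [G ->]]]; apply/inQE.
exists p, (e * lin T d); split.
  apply: goodD_mul => //; exists 0%N, [:: d]; split; first by rewrite /= Hd.
  by rewrite expr0 mul1r big_seq1.
by rewrite -mulrA -invfM /toK tofracM.
Qed.

Lemma inQ_toK (p : ST n T) : inQ R (toK p).
Proof.
apply/inQE; exists p, 1; split; first by exists 0%N, [::]; rewrite big_nil expr0 mulr1.
by rewrite /toK tofrac1 invr1 mulr1.
Qed.
End Q.

Section RS.
Variables (n : nat) (cor : 'rV[int]_n -> 'rV[int]_n) (Pi : seq 'rV[int]_n) (gam : 'rV[int]_n).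

Lemma ev_rcons (s : seq (Shat Pi)) tau l x :
  ev cor gam s (rcons tau l) x = ev cor gam s tau (sref cor gam (nth None s l.-1) x).
Proof. by rewrite /ev foldr_rcons. Qed.

Lemma two_scale (v : 'rV[int]_n) : (2 : int) *: v = v + v.
Proof. by rewrite -[2]/(1 + 1) scalerDl scale1r. Qed.

Lemma sref_root (o : Shat Pi) :
  (forall i : 'I_(size Pi), pairing Pi`_i (cor Pi`_i) = 2) ->
  pairing gam (cor gam) = 2 ->
  sref cor gam o (sroot gam o) = negX (sroot gam o).
Proof.
case: o => [i|] H1 H2 /=; rewrite /aff_refl /negX /=.
  rewrite H1 two_scale mul0r subr0 oppr0; congr (_, _).
  by rewrite opprD addrA subrr add0r.
rewrite pairingN H2; congr (_, _).
by rewrite scaleNr opprK two_scale opprK addrA addNr add0r.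
Qed.

Lemma ev_root (R : seq 'rV[int]_n)
  (HR : forall a b, a \in R -> b \in R -> refl cor a b \in R)
  (HPi : all (fun a => a \in R) Pi) (Hg : gam \in R) (s : seq (Shat Pi)) tau x :
  x.1 \in R -> (ev cor gam s tau x).1 \in R.
Proof.
move=> Hx; elim: tau => [|i tau IH] //=.
case: (nth None s i.-1) => [j|] /=; apply: HR => //.
by apply: (allP HPi); apply: mem_nth.
Qed.
End RS.

Lemma solve2 (F : fieldType) (x w x' w' : F) :
  2%:R != 0 :> F -> x + w = x' + w' -> x - w = x' - w' -> x = x'.
Proof.
move=> H2 E1 E2.
have : (x + w) + (x - w) = (x' + w') + (x' - w') by rewrite E1 E2.
rewrite addrACA subrr addr0 addrACA subrr addr0 -!mulr2n => Hx.
have : x * 2%:R = x' * 2%:R by rewrite !mulr_natr.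
by move/(mulIf H2).
Qed.

Lemma Yrec_Q n (R : seq 'rV[int]_n) cor (Pi : seq 'rV[int]_n) gam (T : idomainType)
  (HR : forall a b, a \in R -> b \in R -> refl cor a b \in R)
  (HPi : all (fun a => a \in R) Pi) (Hg : gam \in R)
  (Hsr : forall o : Shat Pi, (sroot gam o).1 \in R) :
  forall (r : seq (Shat Pi)) (z : Vec n T), Yrec cor gam r z -> forall sigma,
  (inI (size r) sigma -> inQ R (z sigma)) /\ (~~ inI (size r) sigma -> z sigma = 0).
Proof.
elim=> [|a r IH] z.
  move=> [[p Hp] H0] sigma; split.
    case: sigma => [|i t]; first by rewrite Hp => _; apply: inQ_toK.
    by case/andP=> _ /= /andP [/andP [H1 H2] _]; move: (leq_trans H1 H2).
  move=> HI; apply: H0; apply/negP => /eqP E; by rewrite E in HI.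
move=> [y1 [y2 [Y1 [Y2 ->]]]] sigma; rewrite /vadd /cinv /Delta.
case: (boolP (inI (size r).+1 sigma)) => HI; split => // _.
  have Hf := inI_filter HI.
  apply: inQ_add; first by case: (IH y1 Y1 [seq i <- sigma | i != (size r).+1]) => H _; apply: H.
  apply: inQ_div; first by apply: ev_root.
  by case: (IH y2 Y2 [seq i <- sigma | i != (size r).+1]) => H _; apply: H.
by rewrite mul0r addr0.
Qed.
Theorem lemma6p7 (n : nat) (R : seq 'rV[int]_n) (cor : 'rV[int]_n -> 'rV[int]_n)
  (Pi : seq 'rV[int]_n) (gam : 'rV[int]_n) (T : idomainType) :
  irred_reduced_root_system R cor ->
  is_base R Pi ->
  is_highest_root R Pi gam ->
  (2%:R : T) != 0 ->
  (forall d : Xhat n, affine_root R d -> lin T d != 0) ->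
  forall (s' : seq (Shat Pi)) (a : Shat Pi),
  let s := rcons s' a in
  let l := size s in
  let D := @Delta n T l in
  let Ci := @cinv n cor Pi gam T s (sroot gam a) in
  (forall z, @Y n cor Pi gam T s z <->
     exists y1 y2, @Y n cor Pi gam T s' y1 /\ @Y n cor Pi gam T s' y2 /\ z = vadd (D y1) (Ci (D y2))) /\
  (forall y1 y2 y1' y2', @Y n cor Pi gam T s' y1 -> @Y n cor Pi gam T s' y2 ->
     @Y n cor Pi gam T s' y1' -> @Y n cor Pi gam T s' y2' ->
     vadd (D y1) (Ci (D y2)) = vadd (D y1') (Ci (D y2')) ->
     D y1 = D y1' /\ Ci (D y2) = Ci (D y2')) /\
  (forall z, @Y n cor Pi gam T s z -> forall sigma : seq nat,
     (inI l sigma -> @inQ n R T (z sigma)) /\ (~~ inI l sigma -> z sigma = 0)).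
Proof.
move=> [_ [H2r [HR _]]] [_ HPi _ _] [Hg _] H2T _ s' a s l D Ci.
have HPiR : forall i : 'I_(size Pi), Pi`_i \in R.
  by move=> i; apply: (allP HPi); apply: mem_nth.
have H2Pi : forall i : 'I_(size Pi), pairing Pi`_i (cor Pi`_i) = 2.
  by move=> i; apply: H2r.
have H2g := H2r _ Hg.
have Hsr : forall o : Shat Pi, (sroot gam o).1 \in R.
  case=> [i|] /=; first exact: HPiR.
  have <- : refl cor gam gam = - gam.
    by rewrite /refl H2g two_scale opprD addrA subrr add0r.
  exact: HR.
have El : l = (size s').+1 by rewrite /l /s size_rcons.
have Ea : nth None s l.-1 = a by rewrite El /s nth_rcons ltnn eqxx.
split.
  move=> z; rewrite /Y /s rev_rcons.
  have Es : rev (a :: rev s') = rcons s' a by rewrite rev_cons revK.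
  have El' : size (a :: rev s') = l by rewrite El /= size_rev.
  change (Yrec cor gam (a :: rev s') z) with
    (exists y1 y2, Yrec cor gam (rev s') y1 /\ Yrec cor gam (rev s') y2 /\
      z = vadd (Delta (size (a :: rev s')) y1)
         (cinv cor gam (rev (a :: rev s')) (sroot gam a) (Delta (size (a :: rev s')) y2))).
  by rewrite El' Es.
split; last first.
  move=> z Hz sigma.
  have := @Yrec_Q n R cor Pi gam T HR HPi Hg Hsr _ _ Hz sigma.
  by rewrite size_rev.
move=> y1 y2 y1' y2' _ _ _ _ E.
have H2K : (2%:R : K n T) != 0.
  have -> : (2%:R : K n T) = toK (2%:R : ST n T) by rewrite /toK rmorph_nat.
  rewrite /toK tofrac_eq0.
  have -> : (2%:R : ST n T) = (2%:R : T)%:MP_[n.+1] by rewrite rmorph_nat.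
  by rewrite mpolyC_eq0.
have ED : D y1 = D y1'.
  apply: functional_extensionality => sigma.
  rewrite /D /Delta; case: ifP => HI; last by [].
  rewrite El in HI.
  have Ht := inI_filter HI.
  move: Ht; rewrite -El; set tau := [seq i <- sigma | i != l] => Ht.
  have E1 := congr1 (fun f => f tau) E.
  have E2 := congr1 (fun f => f (rcons tau l)) E.
  move: E1 E2; rewrite /vadd /Ci /cinv /D /Delta.
  rewrite El (inI_S Ht) (inI_rcons Ht) (filter_idI Ht) (filter_rconsI Ht) -El.
  rewrite ev_rcons Ea sref_root // evN linN /toK tofracN invrN !mulrN => E1 E2.
  exact: (@solve2 _ _ _ _ _ H2K E1 E2).
split => //.
apply: functional_extensionality => sigma.
have := congr1 (fun f => f sigma) E; rewrite /vadd ED.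
by move/addrI.
Qed.
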